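(* Let $k$ be an odd positive integer, $\ell\in\{0,1,2,\ldots\}$ and $a$ real. Whenever all the arguments of $\tilde\gamma_\cdot$ below are positive, one has $$\sum_{r=1}^{k}(-1)^{r-1}\tilde\gamma_\ell\left(\frac rk-a\right)=k\sum_{j=0}^{\ell}(-1)^j\binom{\ell}{j}\tilde\gamma_{\ell-j}(1-ak)\log^jk,$$ and, if in addition $a>0$, $$\sum_{r=1}^{k}(-1)^{r-1}\tilde\gamma_\ell\left(\frac rk+a\right)=k\sum_{j=0}^{\ell-1}(-1)^j\binom{\ell}{j}\tilde\gamma_{\ell-j}(1+ak)\log^jk+k(-1)^\ell\tilde\psi(ak)\log^\ell k+\frac{(-1)^\ell}{a}\log^\ell k.$$
   Context: For $q>0$, $\zeta_E(z,q)=\sum_{n=0}^\infty (-1)^n (n+q)^{-z}$ for $\mathrm{Re}(z)>0$, extended by analytic continuation to an entire function of $z$. The modified Stieltjes constants $\tilde\gamma_m(q)$ are defined by the Taylor expansion $\zeta_E(z,q)=\sum_{m=0}^\infty\frac{(-1)^m\tilde\gamma_m(q)}{m!}(z-1)^m$. The modified digamma function is $\tilde\psi(q):=-\tilde\gamma_0(q)=-\zeta_E(1,q)$. Convention: $\log^0 k=1$. *)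

(* Defs.v *)
From Stdlib Require Import Reals Lra Lia.
From Coquelicot Require Import Coquelicot.
Open Scope R_scope.

Fixpoint fsum (n : nat) (f : nat -> R) : R :=
  match n with
  | O => 0
  | S m => fsum m f + f m
  end.

(* Alternating Hurwitz zeta  zeta_E(z,q) = sum_{n>=0} (-1)^n (n+q)^{-z},
   as the limit of partial sums (Coquelicot's Series); this is the
   defining series, valid (convergent) for real z > 0, q > 0. *)
Definition zetaE (z q : R) : R :=
  Series (fun n => (-1) ^ n * Rpower (INR n + q) (- z)).

(* Modified Stieltjes constants: zeta_E(z,q) = sum_m (-1)^m gt_m(q)/m! (z-1)^m,
   i.e. gt_m(q) = (-1)^m * (d/dz)^m zeta_E(z,q) at z = 1 (the entire function
   is real-analytic on the real axis, so its Taylor coefficients at the real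
   point 1 are given by the real derivatives of its restriction to z > 0). *)
Definition gammaT (m : nat) (q : R) : R :=
  (-1) ^ m * Derive_n (fun z => zetaE z q) m 1.

Definition psiT (q : R) : R := - gammaT 0 q.

(* Main.v *)
Require Import Defs.
From Stdlib Require Import Reals Lra Lia FunctionalExtensionality.
From Coquelicot Require Import Coquelicot.
Open Scope R_scope.

Lemma fsum_ext n f g : (forall i, (i < n)%nat -> f i = g i) -> fsum n f = fsum n g.
Proof.
  induction n; intros H; simpl; auto.
  rewrite IHn by (intros; apply H; lia). rewrite H by lia. auto.
Qed.

Lemma fsum_plus n f g : fsum n (fun i => f i + g i) = fsum n f + fsum n g.
Proof. induction n; simpl; [lra|]. rewrite IHn; ring. Qed.

Lemma fsum_scal n c f : c * fsum n f = fsum n (fun i => c * f i).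
Proof. induction n; simpl; [ring|]. rewrite <- IHn; ring. Qed.

Lemma fsum_add a b f : fsum (a + b) f = fsum a f + fsum b (fun i => f (a + i)%nat).
Proof.
  induction b; simpl.
  - rewrite Nat.add_0_r; ring.
  - rewrite Nat.add_succ_r; simpl. rewrite IHb; ring.
Qed.

Lemma fsum_front n f : fsum (S n) f = f O + fsum n (fun i => f (S i)).
Proof.
  induction n; simpl in *; [ring|]. rewrite IHn; ring.
Qed.

Lemma sum_n_fsum a n : sum_n a n = fsum (S n) a.
Proof.
  induction n.
  - rewrite sum_O; simpl. symmetry; apply Rplus_0_l.
  - rewrite sum_Sn, IHn. simpl. reflexivity.
Qed.

Lemma sum_f_R0_fsum f n : sum_f_R0 f n = fsum (S n) f.
Proof. induction n; simpl in *; [ring|]. rewrite IHn; ring. Qed.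

Lemma fsum_blocks k N v :
  fsum k (fun i => fsum N (fun n => v (k * n + i)%nat)) = fsum (k * N) v.
Proof.
  induction N; simpl.
  - rewrite Nat.mul_0_r. simpl. clear. induction k; simpl; [auto|]. rewrite IHk; ring.
  - rewrite fsum_plus, IHN. rewrite Nat.mul_succ_r, fsum_add. reflexivity.
Qed.

Lemma alt_bound (c : nat -> R) m : forall n,
  (forall i, (n <= i)%nat -> 0 <= c (S i) <= c i) -> 0 <= c n ->
  0 <= fsum m (fun i => (-1)^i * c (n + i)%nat) <= c n.
Proof.
  induction m; intros n Hd Hn.
  - simpl; lra.
  - rewrite fsum_front. simpl pow at 1. rewrite Nat.add_0_r.
    replace (fsum m (fun i => (-1) ^ S i * c (n + S i)%nat)) with
      (fsum m (fun i => - (1) * (-1) ^ i * c (n + S i)%nat))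
      by (apply fsum_ext; intros; simpl; ring).
    assert (E : fsum m (fun i => - (1) * (-1) ^ i * c (n + S i)%nat)
              = - fsum m (fun i => (-1)^i * c (S n + i)%nat)).
    { replace (- fsum m (fun i => (-1)^i * c (S n + i)%nat)) with
        (-1 * fsum m (fun i => (-1)^i * c (S n + i)%nat)) by ring.
      rewrite fsum_scal.
      apply fsum_ext; intros. rewrite Nat.add_succ_r. simpl. ring. }
    rewrite E.
    destruct (IHm (S n)) as [H1 H2].
    + intros; apply Hd; lia.
    + apply Hd; lia.
    + specialize (Hd n (le_n n)). lra.
Qed.

Lemma exp_pow x n : exp x ^ n = exp (INR n * x).
Proof.
  induction n; simpl.
  - rewrite Rmult_0_l, exp_0; auto.
  - rewrite IHn, <- exp_plus. f_equal. destruct n; simpl; ring.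
Qed.

Lemma exp_le_mono x y : x <= y -> exp x <= exp y.
Proof. intros [H|H]; [left; apply exp_increasing; auto | subst; right; auto]. Qed.

Lemma g_decr p z L1 L2 : 0 < L1 -> 2 * INR p <= L1 -> L1 <= L2 -> 1/2 <= z ->
  L2 ^ p * exp (- z * L2) <= L1 ^ p * exp (- z * L1).
Proof.
  intros H1 H2 H3 H4.
  set (u := (L2 - L1) / L1).
  assert (Hu : 0 <= u) by (unfold u; apply Rdiv_le_0_compat; lra).
  assert (HL2 : L2 = L1 * (1 + u)) by (unfold u; field; lra).
  assert (Hpu : INR p * u <= z * (L2 - L1)).
  { unfold u. apply (Rmult_le_reg_r L1); [lra|].
    replace (INR p * ((L2 - L1) / L1) * L1) with (INR p * (L2 - L1)) by (field; lra).
    assert (0 <= INR p) by apply pos_INR.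
    assert (0 <= L2 - L1) by lra.
    assert (INR p * (L2 - L1) <= L1 / 2 * (L2 - L1)) by (apply Rmult_le_compat_r; lra).
    assert (L1 / 2 * (L2 - L1) <= z * (L2 - L1) * L1).
    { replace (z * (L2 - L1) * L1) with (z * (L1 * (L2 - L1))) by ring.
      replace (L1 / 2 * (L2 - L1)) with (1/2 * (L1 * (L2 - L1))) by field.
      apply Rmult_le_compat_r; [|lra]. apply Rmult_le_pos; lra. }
    lra. }
  assert (Hb : (1 + u) ^ p <= exp (z * (L2 - L1))).
  { apply Rle_trans with (exp u ^ p).
    - apply pow_incr. split; [lra|]. apply exp_ineq1_le.
    - rewrite exp_pow. destruct (Req_dec (INR p * u) (z * (L2 - L1))) as [E|E].
      + rewrite E; lra.
      + left; apply exp_increasing; lra. }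
  rewrite HL2 at 1. rewrite Rpow_mult_distr.
  assert (0 <= L1 ^ p) by (apply pow_le; lra).
  assert (0 < exp (- z * L2)) by apply exp_pos.
  apply Rle_trans with (L1 ^ p * (exp (z * (L2 - L1)) * exp (- z * L2))).
  - rewrite <- Rmult_assoc. apply Rmult_le_compat_r; [lra|].
    apply Rmult_le_compat_l; lra.
  - rewrite <- exp_plus. right. f_equal. f_equal. ring.
Qed.

Lemma g_zmono p z L : 0 <= L -> 1/2 <= z ->
  L ^ p * exp (- z * L) <= L ^ p * exp (- (1/2) * L).
Proof.
  intros. apply Rmult_le_compat_l; [apply pow_le; lra|].
  apply exp_le_mono. nra.
Qed.

Lemma g_small p eps : 0 < eps -> exists M, forall L, M <= L ->
  L ^ p * exp (- (1/2) * L) < eps.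
Proof.
  intros He.
  set (A := 4 * (INR p + 1)).
  assert (HA : 0 < A) by (unfold A; assert (0 <= INR p) by apply pos_INR; lra).
  set (C := A ^ p).
  assert (HC : 0 < C) by (apply pow_lt; lra).
  exists (Rmax 0 (- 4 * ln (eps / C)) + 1). intros L HL.
  assert (HL0 : 0 <= L) by (pose proof (Rmax_l 0 (- 4 * ln (eps / C))); lra).
  assert (HL1 : - 4 * ln (eps / C) < L) by (pose proof (Rmax_r 0 (- 4 * ln (eps / C))); lra).
  set (u := L / A).
  assert (Hu : 0 <= u) by (unfold u; apply Rdiv_le_0_compat; lra).
  assert (HLu : L = A * u) by (unfold u; field; lra).
  assert (Hup : u ^ p <= exp (L / 4)).
  { apply Rle_trans with (exp u ^ p).
    - apply pow_incr. split; [lra|]. pose proof (exp_ineq1_le u); lra.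
    - rewrite exp_pow.
      assert (INR p * u <= L / 4).
      { rewrite HLu. unfold A. assert (0 <= INR p) by apply pos_INR. nra. }
      destruct (Req_dec (INR p * u) (L/4)) as [E|E]; [rewrite E; lra|].
      left; apply exp_increasing; lra. }
  apply Rle_lt_trans with (C * exp (- (L / 4))).
  - rewrite HLu at 1. rewrite Rpow_mult_distr. fold C.
    apply Rle_trans with (C * exp (L / 4) * exp (- (1/2) * L)).
    + apply Rmult_le_compat_r; [apply Rlt_le, exp_pos|].
      apply Rmult_le_compat_l; lra.
    + rewrite Rmult_assoc, <- exp_plus. right. f_equal. f_equal. field.
  - assert (exp (- (L / 4)) < eps / C).
    { rewrite <- (exp_ln (eps / C)) by (apply Rdiv_lt_0_compat; lra).
      apply exp_increasing. lra. }
    apply (Rmult_lt_compat_l C) in H; [|lra].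
    replace (C * (eps / C)) with eps in H by (field; lra). lra.
Qed.

Definition tt (j : nat) (q z : R) (n : nat) : R :=
  (-1) ^ n * ((- ln (INR n + q)) ^ j * exp (- z * ln (INR n + q))).
Definition FF j q z := Series (tt j q z).
Definition Sp j q := fun (N : nat) (z : R) => sum_n (tt j q z) N.

Lemma tt_g j q z n : tt j q z n =
  (-1) ^ j * ((-1) ^ n * (ln (INR n + q) ^ j * exp (- z * ln (INR n + q)))).
Proof.
  unfold tt. replace (- ln (INR n + q)) with (-1 * ln (INR n + q)) by ring.
  rewrite Rpow_mult_distr. ring.
Qed.

Lemma ucauchy j q : 0 < q -> CVU_cauchy (Sp j q) (fun z => 1/2 < z).
Proof.
  intros Hq eps.
  destruct (g_small j eps (cond_pos eps)) as [M HM].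
  set (K := Rmax (2 * INR j + 1) M).
  destruct (INR_unbounded (exp K)) as [N0 HN0].
  exists N0.
  set (L := fun i : nat => ln (INR i + q)).
  assert (HL : forall i, (N0 <= i)%nat -> K < L i).
  { intros i Hi. unfold L. rewrite <- (ln_exp K). apply ln_increasing; [apply exp_pos|].
    apply le_INR in Hi. lra. }
  assert (HK1 : 2 * INR j + 1 <= K) by apply Rmax_l.
  assert (HKM : M <= K) by apply Rmax_r.
  assert (Hj : 0 <= INR j) by apply pos_INR.
  assert (Hmono : forall i, L i <= L (S i)).
  { intros i. unfold L. apply ln_le. pose proof (pos_INR i); lra. rewrite S_INR; lra. }
  assert (claim : forall n m x, 1/2 < x -> (N0 <= n)%nat -> (n <= m)%nat ->
            Rabs (Sp j q n x - Sp j q m x) < eps).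
  { intros n m x Hx Hn Hnm. unfold Sp. rewrite !sum_n_fsum.
    replace (S m) with (S n + (m - n))%nat by lia. rewrite fsum_add.
    set (c := fun i => L i ^ j * exp (- x * L i)).
    replace (fsum (m - n) (fun i => tt j q x (S n + i)))
      with ((-1) ^ j * (-1) ^ (S n) * fsum (m - n) (fun i => (-1) ^ i * c (S n + i)%nat)).
    2:{ rewrite fsum_scal. apply fsum_ext; intros i _. rewrite tt_g, pow_add. unfold c, L. ring. }
    replace (fsum (S n) (tt j q x) -
        (fsum (S n) (tt j q x) + (-1) ^ j * (-1) ^ S n * fsum (m - n) (fun i => (-1) ^ i * c (S n + i)%nat)))
      with (- ((-1) ^ j * (-1) ^ S n * fsum (m - n) (fun i => (-1) ^ i * c (S n + i)%nat))) by ring.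
    rewrite Rabs_Ropp, !Rabs_mult, !pow_1_abs, !Rmult_1_l.
    assert (Hc : forall i, (N0 <= i)%nat -> 0 <= c i).
    { intros i Hi. unfold c. apply Rmult_le_pos; [apply pow_le|apply Rlt_le, exp_pos].
      specialize (HL i Hi). lra. }
    destruct (alt_bound c (m - n) (S n)) as [H1 H2].
    - intros i Hi. split. apply Hc; lia.
      unfold c. apply g_decr; try lra; try (apply Hmono).
      specialize (HL i ltac:(lia)); lra. specialize (HL i ltac:(lia)); lra.
    - apply Hc; lia.
    - rewrite Rabs_pos_eq by lra.
      eapply Rle_lt_trans; [apply H2|]. unfold c.
      eapply Rle_lt_trans; [apply g_zmono; [|lra]|].
      + specialize (HL (S n) ltac:(lia)); lra.
      + apply HM. specialize (HL (S n) ltac:(lia)); lra. }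
  intros n m x Hx Hn Hm.
  destruct (Compare_dec.le_dec n m).
  - apply claim; auto.
  - rewrite Rabs_minus_sym. apply claim; auto; lia.
Qed.

Lemma ucvu j q : 0 < q -> CVU_dom (Sp j q) (fun z => 1/2 < z).
Proof. intros; apply CVU_dom_cauchy, ucauchy; auto. Qed.

Lemma tt_derive j q n z : is_derive (fun z => tt j q z n) z (tt (S j) q z n).
Proof. unfold tt. auto_derive; auto. simpl. ring. Qed.

Lemma fsum_derive j q N z :
  is_derive (fun z => fsum N (tt j q z)) z (fsum N (tt (S j) q z)).
Proof.
  induction N; simpl.
  - apply (is_derive_const 0 z).
  - apply (is_derive_plus (fun z => fsum N (tt j q z)) (fun z => tt j q z N)); auto.
    apply tt_derive.
Qed.

Lemma Sp_derive j q n z : is_derive (Sp j q n) z (Sp (S j) q n z).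
Proof.
  unfold Sp. rewrite sum_n_fsum.
  apply (is_derive_ext (fun z => fsum (S n) (tt j q z))).
  - intros; rewrite sum_n_fsum; auto.
  - apply fsum_derive.
Qed.

Lemma FF_derive j q x : 0 < q -> 1/2 < x -> is_derive (FF j q) x (FF (S j) q x).
Proof.
  intros Hq Hx.
  assert (E : (fun n x => Derive (Sp j q n) x) = Sp (S j) q).
  { apply functional_extensionality; intro n; apply functional_extensionality; intro y.
    apply is_derive_unique, Sp_derive. }
  pose proof (CVU_Derive (Sp j q) (fun z => 1/2 < z) (open_gt _)
    ltac:(intros a b c Ha Hb Hc; lra) (ucvu j q Hq)
    ltac:(intros n y _; eexists; apply Sp_derive)) as H.
  assert (Hc : forall n y, 1/2 < y -> continuity_pt (Derive (Sp j q n)) y).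
  { intros n y _. apply continuity_pt_ext with (Sp (S j) q n).
    - intros; symmetry; apply is_derive_unique, Sp_derive.
    - apply continuity_pt_filterlim. apply (ex_derive_continuous (Sp (S j) q n)).
      eexists; apply Sp_derive. }
  specialize (H Hc ltac:(rewrite E; apply (ucvu (S j) q Hq)) x Hx).
  rewrite (Lim_seq_ext _ (fun n => Sp (S j) q n x)) in H.
  2:{ intros; apply is_derive_unique, Sp_derive. }
  unfold FF, Series. exact H.
Qed.

Lemma FF_conv j q z : 0 < q -> 1/2 < z ->
  is_lim_seq (fun N => fsum N (tt j q z)) (FF j q z).
Proof.
  intros Hq Hz.
  pose proof (CVU_CVS_dom _ _ (ucvu j q Hq) z Hz) as H.
  pose proof (Lim_seq_correct' _ H) as H1.
  apply ex_finite_lim_seq_correct in H. destruct H as [_ H].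
  apply is_lim_seq_incr_1.
  apply (is_lim_seq_ext (fun n => Sp j q n z)).
  - intros; unfold Sp; apply sum_n_fsum.
  - unfold FF, Series. rewrite <- H in H1. exact H1.
Qed.

Lemma zetaE_FF q z : zetaE z q = FF 0 q z.
Proof.
  unfold zetaE, FF. apply Series_ext. intros n. unfold tt, Rpower. simpl. ring.
Qed.

Lemma Dn_FF q m : 0 < q -> forall x, 1/2 < x ->
  Derive_n (fun z => zetaE z q) m x = FF m q x.
Proof.
  intros Hq. induction m; intros x Hx.
  - simpl. apply zetaE_FF.
  - simpl. rewrite (Derive_ext_loc _ (FF m q)).
    + apply is_derive_unique, FF_derive; auto.
    + apply (filter_imp (fun u => 1/2 < u)); [intros; apply IHm; auto|].
      apply (open_gt (1/2) x Hx).
Qed.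

Lemma gammaT_FF m q : 0 < q -> gammaT m q = (-1) ^ m * FF m q 1.
Proof. intros Hq. unfold gammaT. rewrite Dn_FF; auto; lra. Qed.

Lemma fsum_lim2 k (w : nat -> nat -> R) (W : nat -> R) :
  (forall i, (i < k)%nat -> is_lim_seq (fun N => fsum N (w i)) (W i)) ->
  is_lim_seq (fun N => fsum k (fun i => fsum N (w i))) (fsum k W).
Proof.
  induction k; intros H; simpl.
  - apply is_lim_seq_const.
  - apply is_lim_seq_plus'; [apply IHk; intros; apply H; lia | apply H; lia].
Qed.

Lemma fsum_swap N J (s : nat -> nat -> R) :
  fsum N (fun m => fsum J (fun j => s j m)) = fsum J (fun j => fsum N (s j)).
Proof.
  induction J; simpl.
  - clear. induction N; simpl; [auto|]. rewrite IHN; ring.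
  - rewrite fsum_plus, IHJ. reflexivity.
Qed.

Lemma lim_scal_fsum (a : R) f (l : R) :
  is_lim_seq (fun N => fsum N f) l -> is_lim_seq (fun N => fsum N (fun m => a * f m)) (a * l).
Proof.
  intros H. apply (is_lim_seq_ext (fun N => a * fsum N f)).
  - intros; apply fsum_scal.
  - apply (is_lim_seq_scal_l _ a l H).
Qed.

Lemma lim_uniq (u : nat -> R) (x y : R) : is_lim_seq u x -> is_lim_seq u y -> x = y.
Proof.
  intros H1 H2. apply is_lim_seq_unique in H1. apply is_lim_seq_unique in H2.
  rewrite H1 in H2. injection H2; auto.
Qed.

Lemma odd_pow k n : Nat.Odd k -> (-1) ^ (k * n) = (-1) ^ n.
Proof.
  intros [p ->]. rewrite pow_mult. f_equal.
  rewrite pow_add, pow_mult.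
  replace ((-1) ^ 2) with 1 by (simpl; ring). rewrite pow1. simpl. ring.
Qed.

Lemma dist_id (k l : nat) (c : R) : Nat.Odd k -> 0 < c ->
  fsum k (fun i => (-1) ^ i * FF l ((INR i + c) / INR k) 1)
  = INR k * fsum (S l) (fun j => Binomial.C l j * ln (INR k) ^ j * FF (l - j) c 1).
Proof.
  intros Hk Hc.
  assert (Hk1 : (1 <= k)%nat) by (destruct Hk; lia).
  assert (Hkp : 0 < INR k) by (apply lt_0_INR; lia).
  set (lam := ln (INR k)).
  set (v := fun m : nat => INR k * ((-1) ^ m * (lam + - ln (INR m + c)) ^ l
                                    * exp (-1 * ln (INR m + c)))).
  set (V := INR k * fsum (S l) (fun j => Binomial.C l j * lam ^ j * FF (l - j) c 1)).
  assert (H1 : is_lim_seq (fun N => fsum N v) V).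
  { apply (is_lim_seq_ext (fun N => INR k * fsum N (fun m =>
        fsum (S l) (fun j => Binomial.C l j * lam ^ j * tt (l - j) c 1 m)))).
    - intros N. rewrite fsum_scal. apply fsum_ext; intros m _. unfold v.
      rewrite binomial, sum_f_R0_fsum. f_equal. symmetry.
      replace ((-1) ^ m * fsum (S l) (fun i => Binomial.C l i * lam ^ i * (- ln (INR m + c)) ^ (l - i))
               * exp (-1 * ln (INR m + c)))
        with (((-1) ^ m * exp (-1 * ln (INR m + c))) *
              fsum (S l) (fun i => Binomial.C l i * lam ^ i * (- ln (INR m + c)) ^ (l - i))) by ring.
      rewrite fsum_scal. apply fsum_ext; intros j _. unfold tt.
      replace (exp (- (1) * ln (INR m + c))) with (exp (-1 * ln (INR m + c))) by (f_equal; ring). ring.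
    - unfold V. apply (is_lim_seq_scal_l _ (INR k) (fsum (S l) _)).
      apply (is_lim_seq_ext (fun N => fsum (S l) (fun j => fsum N
               (fun m => Binomial.C l j * lam ^ j * tt (l - j) c 1 m)))).
      + intros n; symmetry; apply (fsum_swap n (S l) (fun j m => Binomial.C l j * lam ^ j * tt (l - j) c 1 m)).
      + apply fsum_lim2. intros j _. apply lim_scal_fsum. apply FF_conv; auto; lra. }
  set (q := fun i : nat => (INR i + c) / INR k).
  assert (Hq : forall i, 0 < q i).
  { intros i. unfold q. apply Rdiv_lt_0_compat; [pose proof (pos_INR i)|]; lra. }
  assert (H2 : forall i, (i < k)%nat ->
    is_lim_seq (fun N => fsum N (fun n => v (k * n + i)%nat)) ((-1) ^ i * FF l (q i) 1)).
  { intros i Hi. apply (is_lim_seq_ext (fun N => fsum N (fun n => (-1) ^ i * tt l (q i) 1 n))).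
    - intros N. apply fsum_ext; intros n _. unfold v, tt.
      assert (Hn : 0 < INR n + q i) by (pose proof (pos_INR n); specialize (Hq i); lra).
      assert (E : INR (k * n + i) + c = INR k * (INR n + q i)).
      { rewrite plus_INR, mult_INR. unfold q. field. lra. }
      rewrite E, ln_mult by lra. fold lam.
      rewrite pow_add, odd_pow by auto.
      replace (-1 * (lam + ln (INR n + q i))) with (- lam + -1 * ln (INR n + q i)) by ring.
      rewrite exp_plus. unfold lam. rewrite exp_Ropp, exp_ln by lra.
      replace (ln (INR k) + - (ln (INR k) + ln (INR n + q i))) with (- ln (INR n + q i)) by ring.
      replace (- (1) * ln (INR n + q i)) with (-1 * ln (INR n + q i)) by ring.
      field. lra.
    - apply lim_scal_fsum. apply FF_conv; auto; lra. }
  assert (H3 : is_lim_seq (fun N => fsum (k * N) v) V).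
  { apply (is_lim_seq_subseq (fun N => fsum N v) V (fun N => (k * N)%nat)); auto.
    intros P [N HN]. exists N. intros n Hn. apply HN. nia. }
  assert (H4 : is_lim_seq (fun N => fsum (k * N) v) (fsum k (fun i => (-1) ^ i * FF l (q i) 1))).
  { apply (is_lim_seq_ext (fun N => fsum k (fun i => fsum N (fun n => v (k * n + i)%nat)))).
    - intros; apply fsum_blocks.
    - apply fsum_lim2. auto. }
  apply (lim_uniq _ _ _ H4 H3).
Qed.

Lemma C_nn l : Binomial.C l l = 1.
Proof.
  unfold Binomial.C. rewrite Nat.sub_diag. simpl (Factorial.fact 0). simpl (INR 1).
  field. apply INR_fact_neq_0.
Qed.

Lemma FF_shift q : 0 < q -> FF 0 q 1 = 1 / q - FF 0 (1 + q) 1.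
Proof.
  intros Hq.
  pose proof (FF_conv 0 q 1 Hq ltac:(lra)) as H1.
  apply is_lim_seq_incr_1 in H1.
  pose proof (FF_conv 0 (1 + q) 1 ltac:(lra) ltac:(lra)) as H2.
  apply (lim_uniq _ _ _ H1).
  apply (is_lim_seq_ext (fun N => 1 / q + (-1) * fsum N (tt 0 (1 + q) 1))).
  - intros N. rewrite fsum_front, fsum_scal. f_equal.
    + unfold tt. simpl. rewrite Rplus_0_l.
      replace (- (1) * ln q) with (- ln q) by ring. rewrite exp_Ropp, exp_ln by lra. field; lra.
    + apply fsum_ext; intros n _. unfold tt. rewrite S_INR.
      replace (INR n + 1 + q) with (INR n + (1 + q)) by ring. simpl. ring.
  - replace (1 / q - FF 0 (1 + q) 1) with (1 / q + (-1) * FF 0 (1 + q) 1) by ring.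
    apply is_lim_seq_plus'; [apply is_lim_seq_const|].
    apply (is_lim_seq_scal_l _ (-1) (FF 0 (1 + q) 1) H2).
Qed.

Lemma sign_split l j : (j <= l)%nat -> (-1) ^ j * (-1) ^ (l - j) = (-1) ^ l.
Proof. intros H. rewrite <- pow_add. f_equal. lia. Qed.

Theorem proposition5p6 (k l : nat) (a : R) :
  Nat.Odd k ->
  ((forall r : nat, (1 <= r <= k)%nat -> 0 < INR r / INR k - a) ->
   0 < 1 - a * INR k ->
   fsum k (fun i => (-1) ^ i * gammaT l (INR (S i) / INR k - a))
   = INR k * fsum (S l) (fun j => (-1) ^ j * Binomial.C l j
                      * gammaT (l - j) (1 - a * INR k) * ln (INR k) ^ j))
  /\
  (0 < a ->
   fsum k (fun i => (-1) ^ i * gammaT l (INR (S i) / INR k + a))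
   = INR k * fsum l (fun j => (-1) ^ j * Binomial.C l j
                      * gammaT (l - j) (1 + a * INR k) * ln (INR k) ^ j)
     + INR k * (-1) ^ l * psiT (a * INR k) * ln (INR k) ^ l
     + (-1) ^ l / a * ln (INR k) ^ l).
Proof.
  intros Hk.
  assert (Hk1 : (1 <= k)%nat) by (destruct Hk; lia).
  assert (Hkp : 0 < INR k) by (apply lt_0_INR; lia).
  split.
  - intros Hpos Hc.
    set (c := 1 - a * INR k).
    rewrite (fsum_ext k _ (fun i => (-1) ^ l * ((-1) ^ i * FF l ((INR i + c) / INR k) 1))).
    2:{ intros i Hi. assert (E : INR (S i) / INR k - a = (INR i + c) / INR k)
          by (unfold c; rewrite S_INR; field; lra).
        rewrite gammaT_FF.
        - rewrite E. ring.
        - apply Hpos; lia. }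
    rewrite <- fsum_scal, dist_id by (auto; unfold c; lra).
    rewrite (fsum_ext (S l) (fun j => (-1) ^ j * Binomial.C l j * gammaT (l - j) c * ln (INR k) ^ j)
               (fun j => (-1) ^ l * (Binomial.C l j * ln (INR k) ^ j * FF (l - j) c 1))).
    2:{ intros j Hj. rewrite gammaT_FF by (unfold c; lra).
        rewrite <- (sign_split l j) by lia. ring. }
    rewrite <- fsum_scal. ring.
  - intros Ha.
    set (c := 1 + a * INR k).
    assert (Hak : 0 < a * INR k) by nra.
    rewrite (fsum_ext k _ (fun i => (-1) ^ l * ((-1) ^ i * FF l ((INR i + c) / INR k) 1))).
    2:{ intros i Hi. assert (E : INR (S i) / INR k + a = (INR i + c) / INR k)
          by (unfold c; rewrite S_INR; field; lra).
        rewrite gammaT_FF.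
        - rewrite E. ring.
        - rewrite E. apply Rdiv_lt_0_compat; [pose proof (pos_INR i); unfold c|]; lra. }
    rewrite <- fsum_scal, dist_id by (auto; unfold c; lra).
    simpl fsum at 1. rewrite C_nn, Nat.sub_diag.
    rewrite (fsum_ext l (fun j => (-1) ^ j * Binomial.C l j * gammaT (l - j) c * ln (INR k) ^ j)
               (fun j => (-1) ^ l * (Binomial.C l j * ln (INR k) ^ j * FF (l - j) c 1))).
    2:{ intros j Hj. rewrite gammaT_FF by (unfold c; lra).
        rewrite <- (sign_split l j) by lia. ring. }
    rewrite <- fsum_scal.
    unfold psiT. rewrite gammaT_FF by lra.
    unfold c. rewrite (FF_shift (a * INR k)) by lra.
    simpl pow.
    field. split; lra.
Qed.
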